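(* Let $I\subseteq\mathbb N$ be a finite index set and let $\{\varphi_n:n\in I\}\subseteq\mathcal H$ be a Riesz basis for its span $\mathcal T=\operatorname{span}\{\varphi_n:n\in I\}$ with constants $d_1,d_2$. Let $I$ be partitioned into disjoint subsets $I_1,\dots,I_r$ and set $\mathcal T_i=\operatorname{span}\{\varphi_n:n\in I_i\}$. Then for all $z\ge0$, $$E(\mathcal T,z)\le\sqrt{\frac{d_2}{d_1}\sum_{i=1}^rE(\mathcal T_i,z)^2},$$ and, for a sequence $\{\omega_n\}_{n\in\mathbb Z}$ giving rise to a Fourier frame for $\mathcal H$ and every $N\in\mathbb N$, $$\tilde E(\mathcal T,N)\le\sqrt{\frac{d_2}{d_1}\sum_{i=1}^r\tilde E(\mathcal T_i,N)^2}.$$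
   Context: $\mathcal H=\{f\in L^2(\mathbb R):\operatorname{supp}f\subseteq[0,1]\}$; $\hat f(\omega)=\int f(x)e^{-2\pi i\omega x}dx$; $\|g\|_J^2=\int_J|g|^2$. Riesz basis with constants $d_1,d_2$: $d_1\sum|a_n|^2\le\|\sum a_n\varphi_n\|^2\le d_2\sum|a_n|^2$ for all coefficients. $E(\mathcal U,z)=\sup\{\|\hat f\|_{\mathbb R\setminus(-z,z)}:f\in\mathcal U,\|f\|=1\}$. A sequence $\{\omega_n\}_{n\in\mathbb Z}$ gives rise to a Fourier frame for $\mathcal H$ if there are $0<A\le B<\infty$ with $A\|f\|^2\le\sum_n|\hat f(\omega_n)|^2\le B\|f\|^2$ for all $f\in\mathcal H$; then $\tilde E(\mathcal U,N)^2=\sup\{\sum_{|n|>N}|\hat f(\omega_n)|^2:f\in\mathcal U,\|f\|=1\}$. *)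

(* Defs.v *)
From mathcomp Require Import all_boot all_order all_algebra.
From mathcomp Require Import all_classical all_reals all_analysis.
From mathcomp Require Import complex.
Import Order.TTheory GRing.Theory Num.Theory.
Set Implicit Arguments. Unset Strict Implicit. Unset Printing Implicit Defensive.
Local Open Scope classical_set_scope.
Local Open Scope ring_scope.

Section Defs.
Variable R : realType.
Local Notation C := (R[i]).
Local Notation mu := (@lebesgue_measure R).

Definition sqmod (z : C) : R := (complex.Re z) ^+ 2 + (complex.Im z) ^+ 2.

Definition hnorm2 (f : R -> C) : \bar R :=
  (\int[mu]_(x in [set: R]) (sqmod (f x))%:E)%E.

(* f is (a representative of) an element of H = {f in L^2(R) : supp f in [0,1]} *)
Definition inH (f : R -> C) : Prop :=
  [/\ measurable_fun [set: R] (fun x => complex.Re (f x)),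
      measurable_fun [set: R] (fun x => complex.Im (f x)),
      (forall x, (x < 0) \/ (1 < x) -> f x = 0) &
      (hnorm2 f < +oo)%E].

(* \hat f(w) = \int f(x) e^{-2 pi i w x} dx, split into real and imaginary parts *)
Definition fourier (f : R -> C) (w : R) : C :=
  Complex
    (Rintegral mu [set: R] (fun x => complex.Re (f x) * cos (2 * pi * w * x)
                                   + complex.Im (f x) * sin (2 * pi * w * x)))
    (Rintegral mu [set: R] (fun x => complex.Im (f x) * cos (2 * pi * w * x)
                                   - complex.Re (f x) * sin (2 * pi * w * x))).

Definition hat_tail2 (f : R -> C) (z : R) : \bar R :=
  (\int[mu]_(w in [set w : R | (z <= `|w|)%R]) (sqmod (fourier f w))%:E)%E.

(* E(U,z) = sup { ||\hat f||_{R\(-z,z)} : f in U, ||f|| = 1 }  (sup of the empty set := 0) *)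
Definition Econc (U : set (R -> C)) (z : R) : \bar R :=
  ereal_sup ([set 0%E] `|`
    [set sqrte (hat_tail2 f z) | f in [set f | U f /\ inH f /\ hnorm2 f = 1%E]]).

Definition Etilde (w : int -> R) (U : set (R -> C)) (N : nat) : \bar R :=
  sqrte (ereal_sup ([set 0%E] `|`
    [set (\esum_(n in [set n : int | (N%:Z < `|n|)%R]) (sqmod (fourier f (w n)))%:E)%E
      | f in [set f | U f /\ inH f /\ hnorm2 f = 1%E]])).

Definition lincomb (I : finType) (phi : I -> R -> C) (P : pred I) (a : I -> C) : R -> C :=
  fun x => \sum_(n | P n) a n * phi n x.

Definition cspan (I : finType) (phi : I -> R -> C) (P : pred I) : set (R -> C) :=
  [set g | exists a : I -> C, g = lincomb phi P a].

Definition riesz_basis (I : finType) (phi : I -> R -> C) (d1 d2 : R) : Prop :=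
  [/\ 0 < d1, (forall n, inH (phi n)) &
      forall a : I -> C,
        (d1%:E * (\sum_n sqmod (a n))%:E <= hnorm2 (lincomb phi predT a))%E /\
        (hnorm2 (lincomb phi predT a) <= d2%:E * (\sum_n sqmod (a n))%:E)%E].

Definition fourier_frame (w : int -> R) : Prop :=
  exists A B : R, [/\ 0 < A, A <= B &
    forall f, inH f ->
      (A%:E * hnorm2 f <= \esum_(n in [set: int]) (sqmod (fourier f (w n)))%:E)%E /\
      (\esum_(n in [set: int]) (sqmod (fourier f (w n)))%:E <= B%:E * hnorm2 f)%E].

End Defs.

(* Main.v *)
Require Import Defs.
From mathcomp Require Import all_boot all_order all_algebra.
From mathcomp Require Import all_classical all_reals all_analysis.
From mathcomp Require Import complex.
From mathcomp Require Import measurable_realfun.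
From mathcomp Require Import ring lra.
Import Order.TTheory GRing.Theory Num.Theory.
Import numFieldNormedType.Exports.
Local Open Scope classical_set_scope.
Local Open Scope ring_scope.
Set Implicit Arguments. Unset Strict Implicit.

Lemma sqmod_ge0 (R : realType) (z : R[i]) : 0 <= sqmod z.
Proof. by rewrite /sqmod addr_ge0 // sqr_ge0. Qed.

Lemma measurable_sqmod (R : realType) (f : R -> R[i]) : inH f ->
  measurable_fun [set: R] (fun x => sqmod (f x)).
Proof.
case=> mRe mIm _ _; rewrite /sqmod.
by apply: measurable_funD; apply: measurable_funX.
Qed.

Lemma inH_int_aux (R : realType) (f : R -> R[i]) (g : R -> R) :
  inH f -> measurable_fun [set: R] g ->
  (forall x, `|g x| <= 1 + sqmod (f x)) ->
  (forall x, (x < 0) \/ (1 < x) -> g x = 0) ->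
  (@lebesgue_measure R).-integrable [set: R] (EFin \o g).
Proof.
move=> Hf mg gle g0.
have mi : measurable (`[0%R, 1%R] : set R) by [].
have H := @le_integrable _ _ _ (@lebesgue_measure R) [set: R] measurableT (EFin \o g) (fun x => ((\1_`[0%R, 1%R] x : R) + sqmod (f x))%:E).
apply: H.
- by apply/measurable_EFinP.
- move=> x _ /=; rewrite lee_fin.
  have h0 := sqmod_ge0 (f x).
  have [x0|x0] := ltP x 0.
    by rewrite g0 ?normr0 ?normr_ge0 //; left.
  have [x1|x1] := ltP 1 x.
    by rewrite g0 ?normr0 ?normr_ge0 //; right.
  rewrite indicE mem_set; last by rewrite /= in_itv /= x0 x1.
  by apply: le_trans (gle x) _; exact: ler_norm.
- rewrite (_ : (fun x => _) = (fun x => (\1_`[0%R, 1%R] x)%:E + (sqmod (f x))%:E)%E); last first.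
    by apply: funext => x.
  apply: integrableD => //.
    apply/integrableP; split; first by apply/measurable_EFinP; exact: measurable_indic.
    under eq_integral do rewrite gee0_abs ?lee_fin//.
    rewrite integral_indic // setIT.
    apply: compact_finite_measure; exact: segment_compact.
  apply/integrableP; split; first by apply/measurable_EFinP; exact: measurable_sqmod.
  under eq_integral do rewrite gee0_abs ?lee_fin ?sqmod_ge0//.
  by case: Hf.
Qed.

Lemma abs_le_sq (R : realType) (t : R) : `|t| <= 1/2 + t ^+ 2.
Proof.
have [t0|t0] := lerP 0 t.
  rewrite ger0_norm //; nra.
rewrite ltr0_norm //; nra.
Qed.

Lemma inH_Re_int (R : realType) (f : R -> R[i]) (c : R -> R) :
  inH f -> measurable_fun [set: R] c -> (forall x, `|c x| <= 1) ->
  (@lebesgue_measure R).-integrable [set: R]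
     (EFin \o (fun x => complex.Re (f x) * c x)).
Proof.
move=> Hf mc c1; apply: (inH_int_aux Hf).
- by case: Hf => mRe mIm _ _; exact: measurable_funM.
- move=> x; rewrite normrM.
  have h1 := abs_le_sq (complex.Re (f x)).
  have h2 : 0 <= complex.Im (f x) ^+ 2 by rewrite sqr_ge0.
  have h3 := c1 x. have h4 : 0 <= `|c x| by [].
  have h5 : 0 <= `|complex.Re (f x)| by [].
  rewrite /sqmod; nra.
- by case: Hf => _ _ H0 _ x /H0 ->; rewrite mul0r.
Qed.

Lemma inH_Im_int (R : realType) (f : R -> R[i]) (c : R -> R) :
  inH f -> measurable_fun [set: R] c -> (forall x, `|c x| <= 1) ->
  (@lebesgue_measure R).-integrable [set: R]
     (EFin \o (fun x => complex.Im (f x) * c x)).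
Proof.
move=> Hf mc c1; apply: (inH_int_aux Hf).
- by case: Hf => mRe mIm _ _; exact: measurable_funM.
- move=> x; rewrite normrM.
  have h1 := abs_le_sq (complex.Im (f x)).
  have h2 : 0 <= complex.Re (f x) ^+ 2 by rewrite sqr_ge0.
  have h3 := c1 x. have h4 : 0 <= `|c x| by [].
  have h5 : 0 <= `|complex.Im (f x)| by [].
  rewrite /sqmod; nra.
- by case: Hf => _ _ H0 _ x /H0 ->; rewrite mul0r.
Qed.

Lemma Rintegral_sumT (R : realType) (J : Type) (s : seq J) (P : pred J)
   (h : J -> R -> R) :
  (forall n, (@lebesgue_measure R).-integrable [set: R] (EFin \o h n)) ->
  Rintegral (@lebesgue_measure R) [set: R] (fun x => \sum_(n <- s | P n) h n x) =
  \sum_(n <- s | P n) Rintegral (@lebesgue_measure R) [set: R] (h n).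
Proof.
move=> hi; rewrite /Rintegral.
under eq_integral do rewrite -sumEFin.
rewrite integral_sum //.
rewrite -EFin_sum_fine //.
by move=> n _; exact: (integrable_fin_num _ (hi n)).
Qed.

Lemma Re_sum (R : realType) (J : Type) (s : seq J) (P : pred J) (z : J -> R[i]) :
  complex.Re (\sum_(n <- s | P n) z n) = \sum_(n <- s | P n) complex.Re (z n).
Proof.
elim: s => [|n s IH]; first by rewrite !big_nil.
rewrite !big_cons; case: (P n) => //; rewrite -IH.
by case: (z n) => ? ?; case: (\sum_(j <- s | P j) z j).
Qed.

Lemma Im_sum (R : realType) (J : Type) (s : seq J) (P : pred J) (z : J -> R[i]) :
  complex.Im (\sum_(n <- s | P n) z n) = \sum_(n <- s | P n) complex.Im (z n).
Proof.
elim: s => [|n s IH]; first by rewrite !big_nil.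
rewrite !big_cons; case: (P n) => //; rewrite -IH.
by case: (z n) => ? ?; case: (\sum_(j <- s | P j) z j).
Qed.

Lemma ReM (R : realType) (a b : R[i]) :
  complex.Re (a * b) = complex.Re a * complex.Re b - complex.Im a * complex.Im b.
Proof. by case: a => ? ?; case: b => ? ?. Qed.

Lemma ImM (R : realType) (a b : R[i]) :
  complex.Im (a * b) = complex.Re a * complex.Im b + complex.Im a * complex.Re b.
Proof. by case: a => ? ?; case: b => ? ?. Qed.

Lemma intR_D (R : realType) (f g : R -> R) :
  (@lebesgue_measure R).-integrable [set: R] (EFin \o f) ->
  (@lebesgue_measure R).-integrable [set: R] (EFin \o g) ->
  (@lebesgue_measure R).-integrable [set: R] (EFin \o (fun x => f x + g x)).
Proof.
move=> hf hg; rewrite (_ : _ \o _ = ((EFin \o f) \+ (EFin \o g))%E); last by apply: funext.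
exact: integrableD.
Qed.

Lemma intR_B (R : realType) (f g : R -> R) :
  (@lebesgue_measure R).-integrable [set: R] (EFin \o f) ->
  (@lebesgue_measure R).-integrable [set: R] (EFin \o g) ->
  (@lebesgue_measure R).-integrable [set: R] (EFin \o (fun x => f x - g x)).
Proof.
move=> hf hg; rewrite (_ : _ \o _ = ((EFin \o f) \- (EFin \o g))%E); last by apply: funext.
exact: integrableB.
Qed.

Lemma intR_Z (R : realType) (k : R) (f : R -> R) :
  (@lebesgue_measure R).-integrable [set: R] (EFin \o f) ->
  (@lebesgue_measure R).-integrable [set: R] (EFin \o (fun x => k * f x)).
Proof.
move=> hf; rewrite (_ : _ \o _ = (fun x => k%:E * (EFin \o f) x)%E); last by apply: funext.
exact: integrableZl.
Qed.

Lemma meas_cos (R : realType) (w : R) :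
  measurable_fun [set: R] (fun x : R => cos (2 * pi * w * x)).
Proof.
apply: (measurableT_comp (f := cos)).
  exact: continuous_measurable_fun (@continuous_cos R).
by apply: measurable_funM => //; exact: measurable_cst.
Qed.

Lemma meas_sin (R : realType) (w : R) :
  measurable_fun [set: R] (fun x : R => sin (2 * pi * w * x)).
Proof.
apply: (measurableT_comp (f := sin)).
  exact: continuous_measurable_fun (@continuous_sin R).
by apply: measurable_funM => //; exact: measurable_cst.
Qed.

Lemma fourier_lincomb (R : realType) (I : finType) (phi : I -> R -> R[i])
   (P : pred I) (a : I -> R[i]) (w : R) :
  (forall n, inH (phi n)) ->
  fourier (lincomb phi P a) w = \sum_(n | P n) a n * fourier (phi n) w.
Proof.
move=> Hphi.
have mc := meas_cos w. have ms := meas_sin w.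
have c1 : forall x : R, `|cos (2 * pi * w * x)| <= 1 by move=> x; exact: cos_max.
have s1 : forall x : R, `|sin (2 * pi * w * x)| <= 1 by move=> x; exact: sin_max.
have iRc n := inH_Re_int (Hphi n) mc c1.
have iRs n := inH_Re_int (Hphi n) ms s1.
have iIc n := inH_Im_int (Hphi n) mc c1.
have iIs n := inH_Im_int (Hphi n) ms s1.
apply/eqP; rewrite eq_complex; apply/andP; split; apply/eqP; rewrite /fourier /=.
- rewrite Re_sum.
  transitivity (Rintegral (@lebesgue_measure R) [set: R] (fun x => \sum_(n | P n)
     (complex.Re (a n) * (complex.Re (phi n x) * cos (2 * pi * w * x) + complex.Im (phi n x) * sin (2 * pi * w * x))
    - complex.Im (a n) * (complex.Im (phi n x) * cos (2 * pi * w * x) - complex.Re (phi n x) * sin (2 * pi * w * x))))).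
    congr Rintegral; apply: funext => x.
    rewrite /lincomb Re_sum Im_sum !mulr_suml -big_split /=; apply: eq_bigr => n _.
    rewrite ReM ImM; ring.
  rewrite Rintegral_sumT; last first.
    by move=> n; apply: intR_B; apply: intR_Z; [apply: intR_D|apply: intR_B].
  apply: eq_bigr => n _; rewrite ReM /=.
  rewrite RintegralB //; [|apply: intR_Z; apply: intR_D => //|apply: intR_Z; apply: intR_B => //].
  by rewrite !RintegralZl //; [apply: intR_B|apply: intR_D].
- rewrite Im_sum.
  transitivity (Rintegral (@lebesgue_measure R) [set: R] (fun x => \sum_(n | P n)
     (complex.Re (a n) * (complex.Im (phi n x) * cos (2 * pi * w * x) - complex.Re (phi n x) * sin (2 * pi * w * x))
    + complex.Im (a n) * (complex.Re (phi n x) * cos (2 * pi * w * x) + complex.Im (phi n x) * sin (2 * pi * w * x))))).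
    congr Rintegral; apply: funext => x.
    rewrite /lincomb Re_sum Im_sum !mulr_suml -sumrB /=; apply: eq_bigr => n _.
    rewrite ReM ImM; ring.
  rewrite Rintegral_sumT; last first.
    by move=> n; apply: intR_D; apply: intR_Z; [apply: intR_B|apply: intR_D].
  apply: eq_bigr => n _; rewrite ImM /=.
  rewrite RintegralD //; [|apply: intR_Z; apply: intR_B => //|apply: intR_Z; apply: intR_D => //].
  by rewrite !RintegralZl //; [apply: intR_D|apply: intR_B].
Qed.

Lemma cont_trig (R : realType) (A B y : R) :
  continuous (fun l : R => A * cos (2 * pi * l * y) + B * sin (2 * pi * l * y)).
Proof.
move=> l.
have hl : {for l, continuous (fun l : R => 2 * pi * l * y)}.
  apply: (@continuousM _ _ (fun l : R => 2 * pi * l) (fun=> y)); last exact: cvg_cst.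
  apply: (@continuousM _ _ (fun=> 2 * pi) (fun l : R => l)); [exact: cvg_cst|exact: cvg_id].
apply: (@continuousD _ _ _ (fun l : R => A * cos (2 * pi * l * y))
                           (fun l : R => B * sin (2 * pi * l * y))).
- apply: (@continuousM _ _ (fun=> A) (fun l : R => cos (2 * pi * l * y))); first exact: cvg_cst.
  exact: (continuous_comp hl (@continuous_cos R _)).
- apply: (@continuousM _ _ (fun=> B) (fun l : R => sin (2 * pi * l * y))); first exact: cvg_cst.
  exact: (continuous_comp hl (@continuous_sin R _)).
Qed.

Lemma int_absReIm (R : realType) (f : R -> R[i]) : inH f ->
  (@lebesgue_measure R).-integrable [set: R]
     (EFin \o (fun x => `|complex.Re (f x)| + `|complex.Im (f x)|)).
Proof.
move=> Hf; apply: (inH_int_aux Hf).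
- case: Hf => mRe mIm _ _; apply: measurable_funD.
    exact: (measurableT_comp (@normr_measurable R setT) mRe).
  exact: (measurableT_comp (@normr_measurable R setT) mIm).
- move=> x; have h1 := abs_le_sq (complex.Re (f x)).
  have h2 := abs_le_sq (complex.Im (f x)).
  rewrite ger0_norm ?addr_ge0 // /sqmod; lra.
- by case: Hf => _ _ H0 _ x /H0 ->; rewrite /= normr0 addr0.
Qed.

Lemma trig_bound (R : realType) (a b t : R) :
  `|a * cos t + b * sin t| <= `|a| + `|b|.
Proof.
apply: le_trans (ler_normD _ _) _; rewrite !normrM.
have := cos_max t; have := sin_max t.
have : 0 <= `|a| by []. have : 0 <= `|b| by [].
nra.
Qed.

Lemma trig_bound2 (R : realType) (a b t : R) :
  `|a * cos t - b * sin t| <= `|b| + `|a|.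
Proof.
apply: le_trans (ler_normB _ _) _; rewrite !normrM.
have := cos_max t; have := sin_max t.
have : 0 <= `|a| by []. have : 0 <= `|b| by [].
nra.
Qed.

Lemma fourier_Re_cont (R : realType) (f : R -> R[i]) : inH f ->
  continuous (fun w => complex.Re (fourier f w)).
Proof.
move=> Hf w0.
have c1 (w : R) : forall x : R, `|cos (2 * pi * w * x)| <= 1 by move=> x; exact: cos_max.
have s1 (w : R) : forall x : R, `|sin (2 * pi * w * x)| <= 1 by move=> x; exact: sin_max.
pose h := fun (l x : R) => complex.Re (f x) * cos (2 * pi * l * x)
   + complex.Im (f x) * sin (2 * pi * l * x).
have H1 : forall l, `]w0 - 1, w0 + 1[%classic l ->
    (@lebesgue_measure R).-integrable [set: R] (EFin \o h l).
  move=> l _; apply: intR_D.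
    exact: (inH_Re_int Hf (meas_cos l) (c1 l)).
  exact: (inH_Im_int Hf (meas_sin l) (s1 l)).
have H2 : {ae (@lebesgue_measure R), forall y, [set: R] y ->
     {in `]w0 - 1, w0 + 1[%classic, continuous (h ^~ y)}}.
  apply: aeW => y _ l _; exact: cont_trig.
have H4 : forall l, `]w0 - 1, w0 + 1[%classic l -> {ae (@lebesgue_measure R), forall y, [set: R] y ->
     `|h l y| <= `|complex.Re (f y)| + `|complex.Im (f y)|}.
  move=> l _; apply: aeW => y _; exact: trig_bound.
have H := @continuity_under_integral R _ (measurableTypeR R) (@lebesgue_measure R) h [set: R] measurableT
     (w0 - 1) (w0 + 1) H1 H2 _ (int_absReIm Hf) H4.
apply: H; rewrite inE /= in_itv /=; apply/andP; split; lra.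
Qed.

Lemma fourier_Im_cont (R : realType) (f : R -> R[i]) : inH f ->
  continuous (fun w => complex.Im (fourier f w)).
Proof.
move=> Hf w0.
have c1 (w : R) : forall x : R, `|cos (2 * pi * w * x)| <= 1 by move=> x; exact: cos_max.
have s1 (w : R) : forall x : R, `|sin (2 * pi * w * x)| <= 1 by move=> x; exact: sin_max.
pose h := fun (l x : R) => complex.Im (f x) * cos (2 * pi * l * x)
   - complex.Re (f x) * sin (2 * pi * l * x).
have H1 : forall l, `]w0 - 1, w0 + 1[%classic l ->
    (@lebesgue_measure R).-integrable [set: R] (EFin \o h l).
  move=> l _; apply: intR_B.
    exact: (inH_Im_int Hf (meas_cos l) (c1 l)).
  exact: (inH_Re_int Hf (meas_sin l) (s1 l)).
have H2 : {ae (@lebesgue_measure R), forall y, [set: R] y ->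
     {in `]w0 - 1, w0 + 1[%classic, continuous (h ^~ y)}}.
  apply: aeW => y _ l _.
  have := @cont_trig R (complex.Im (f y)) (- complex.Re (f y)) y l.
  by rewrite /h; under eq_fun do rewrite mulNr.
have H4 : forall l, `]w0 - 1, w0 + 1[%classic l -> {ae (@lebesgue_measure R), forall y, [set: R] y ->
     `|h l y| <= `|complex.Re (f y)| + `|complex.Im (f y)|}.
  move=> l _; apply: aeW => y _; exact: trig_bound2.
have H := @continuity_under_integral R _ (measurableTypeR R) (@lebesgue_measure R) h [set: R] measurableT
     (w0 - 1) (w0 + 1) H1 H2 _ (int_absReIm Hf) H4.
apply: H; rewrite inE /= in_itv /=; apply/andP; split; lra.
Qed.

Lemma meas_sqmod_fourier (R : realType) (f : R -> R[i]) : inH f ->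
  measurable_fun [set: R] (fun w => sqmod (fourier f w)).
Proof.
move=> Hf; rewrite /sqmod; apply: measurable_funD; apply: measurable_funX;
  apply: continuous_measurable_fun; [exact: fourier_Re_cont|exact: fourier_Im_cont].
Qed.

Lemma wCS (R : realType) (J : finType) (s x : J -> R) :
  (forall i, 0 <= s i) -> (forall i, s i = 0 -> x i = 0) ->
  (\sum_i x i) ^+ 2 <= (\sum_i s i) * \sum_i (x i ^+ 2 / s i).
Proof.
move=> s0 sx.
pose q i := x i / s i.
have xq i : x i = s i * q i.
  have [si0|si] := eqVneq (s i) 0; first by rewrite (sx _ si0) si0 mul0r.
  by rewrite /q mulrC divfK.
have xq2 i : x i ^+ 2 / s i = s i * q i ^+ 2.
  have [si0|si] := eqVneq (s i) 0; first by rewrite (sx _ si0) si0 invr0 mulr0 mul0r.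
  by rewrite /q; field.
rewrite (eq_bigr _ (fun i _ => xq i)) (eq_bigr _ (fun i _ => xq2 i)).
set T := \sum_i s i.
have T0 : 0 <= T by apply: sumr_ge0.
have [T0'|Tp] := eqVneq T 0.
  have /psumr_eq0P H : \sum_i s i = 0 by [].
  rewrite big1; last by move=> i _; rewrite H // mul0r.
  by rewrite expr0n /= mulr_ge0 // sumr_ge0 // => i _; rewrite mulr_ge0 // sqr_ge0.
have Tpos : 0 < T by rewrite lt_def Tp T0.
set A := \sum_i s i * q i ^+ 2.
set B := \sum_i s i * q i.
pose m := B / T.
have H : 0 <= \sum_i s i * (q i - m) ^+ 2.
  by apply: sumr_ge0 => i _; rewrite mulr_ge0 // sqr_ge0.
have E : \sum_i s i * (q i - m) ^+ 2 = A - 2 * m * B + m ^+ 2 * T.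
  rewrite /A /B /T mulr_sumr mulr_sumr -sumrB -big_split /=.
  by apply: eq_bigr => i _; ring.
rewrite E /m in H.
have E2 : A - 2 * (B / T) * B + (B / T) ^+ 2 * T = (T * A - B ^+ 2) / T.
  by field; rewrite Tp.
rewrite E2 in H.
have H2 : 0 <= (T * A - B ^+ 2) / T * T by rewrite mulr_ge0 // ltW.
rewrite divfK ?Tp // in H2.
lra.
Qed.

Lemma wCS_c (R : realType) (J : finType) (s : J -> R) (u : J -> R[i]) :
  (forall i, 0 <= s i) -> (forall i, s i = 0 -> u i = 0) ->
  sqmod (\sum_i u i) <= (\sum_i s i) * \sum_i (sqmod (u i) / s i).
Proof.
move=> s0 su; rewrite /sqmod Re_sum Im_sum.
have sRe : forall i, s i = 0 -> complex.Re (u i) = 0 by move=> i H; rewrite su.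
have sIm : forall i, s i = 0 -> complex.Im (u i) = 0 by move=> i H; rewrite su.
have h1 := @wCS R J s (fun i => complex.Re (u i)) s0 sRe.
have h2 := @wCS R J s (fun i => complex.Im (u i)) s0 sIm.
rewrite [X in _ <= _ * X](eq_bigr (fun i => complex.Re (u i) ^+ 2 / s i + complex.Im (u i) ^+ 2 / s i));
  last by move=> i _; rewrite mulrDl.
rewrite big_split /= mulrDr; lra.
Qed.

Lemma tail_meas (R : realType) (z : R) :
  measurable [set w : R | z <= `|w|].
Proof.
have -> : [set w : R | z <= `|w|] = [set: R] `&` ((@Num.Def.normr _ R) @^-1` `[z, +oo[%classic).
  by apply/seteqP; split => x /=; rewrite ?in_itv /= ?andbT //; move=> [_].
by apply: normr_measurable => //; exact: measurable_itv.
Qed.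

Lemma Q1mono (R : realType) (z : R) (J : finType) (h : R -> R[i]) (g : J -> R -> R[i]) (c : J -> R) :
  inH h -> (forall j, inH (g j)) -> (forall j, 0 <= c j) ->
  (forall t, sqmod (fourier h t) <= \sum_j c j * sqmod (fourier (g j) t)) ->
  (hat_tail2 h z <= \sum_j (c j)%:E * hat_tail2 (g j) z)%E.
Proof.
move=> Hh Hg c0 Hle; rewrite /hat_tail2.
have mT := tail_meas z.
apply: le_trans.
  apply: (@ge0_le_integral _ _ _ (@lebesgue_measure R) _ _ _ (fun t => (\sum_j c j * sqmod (fourier (g j) t))%:E)).
  - exact: mT.
  - by move=> t _; rewrite lee_fin sqmod_ge0.
  - apply/measurable_EFinP; apply: measurable_funS (meas_sqmod_fourier Hh) => //.
  - apply/measurable_EFinP; apply: measurable_funS (_ : measurable_fun [set: R] _) => //.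
    rewrite (_ : (fun t => _) = (fun t => \sum_(j <- enum J) c j * sqmod (fourier (g j) t))); last first.
      by apply: funext => t; rewrite big_enum.
    elim: (enum J) => [|j s IH]; under eq_fun do rewrite ?big_nil ?big_cons.
      exact: measurable_cst.
    apply: measurable_funD => //; apply: measurable_funM; first exact: measurable_cst.
    exact: meas_sqmod_fourier.
  - by move=> t _; rewrite lee_fin.
under eq_integral do rewrite -sumEFin.
rewrite ge0_integral_sum //.
- rewrite le_eqVlt; apply/orP; left; apply/eqP; apply: eq_bigr => j _.
  under eq_integral do rewrite EFinM.
  rewrite ge0_integralZl // ?lee_fin //.
    by apply/measurable_EFinP; apply: measurable_funS (meas_sqmod_fourier (Hg j)) => //.
  by move=> t _; rewrite lee_fin sqmod_ge0.
- move=> j; apply/measurable_EFinP; apply: measurable_funM; first exact: measurable_cst.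
  by apply: measurable_funS (meas_sqmod_fourier (Hg j)) => //.
- by move=> j t _; rewrite lee_fin mulr_ge0 // sqmod_ge0.
Qed.

Lemma esumZ_le (R : realType) (T : choiceType) (D : set T) (a : T -> \bar R) (c : R) :
  (forall i, (0 <= a i)%E) -> 0 <= c ->
  (\esum_(i in D) (c%:E * a i) <= c%:E * \esum_(i in D) a i)%E.
Proof.
move=> a0 c0; rewrite /esum; apply: ge_ereal_sup => _ [X fX <-] /=.
rewrite -ge0_mule_fsumr //; apply: lee_wpmul2l; first by rewrite lee_fin.
by apply: ereal_sup_ubound; exists X.
Qed.

Lemma Q2mono (R : realType) (w : int -> R) (N : nat) (J : finType) (h : R -> R[i])
   (g : J -> R -> R[i]) (c : J -> R) :
  (forall j, 0 <= c j) ->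
  (forall t, sqmod (fourier h t) <= \sum_j c j * sqmod (fourier (g j) t)) ->
  (\esum_(n in [set n : int | (N%:Z < `|n|)%R]) (sqmod (fourier h (w n)))%:E <=
   \sum_j (c j)%:E * \esum_(n in [set n : int | (N%:Z < `|n|)%R]) (sqmod (fourier (g j) (w n)))%:E)%E.
Proof.
move=> c0 Hle.
apply: (@le_trans _ _ (\esum_(n in [set n : int | (N%:Z < `|n|)%R])
   \sum_j (c j * sqmod (fourier (g j) (w n)))%:E)%E).
  by apply: le_esum => n _; rewrite sumEFin lee_fin.
rewrite esum_sum; last by move=> n j _ _; rewrite lee_fin mulr_ge0 // sqmod_ge0.
apply: lee_sum => j _.
under eq_esum do rewrite EFinM.
by apply: esumZ_le => // n; rewrite lee_fin sqmod_ge0.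
Qed.

Lemma meas_sum_real (R : realType) (J : Type) (s : seq J) (P : pred J) (h : J -> R -> R) :
  (forall j, measurable_fun [set: R] (h j)) ->
  measurable_fun [set: R] (fun x => \sum_(j <- s | P j) h j x).
Proof.
move=> mh; elim: s => [|j s IH].
  by under eq_fun do rewrite big_nil; exact: measurable_cst.
under eq_fun do rewrite big_cons.
case: (P j) => //; exact: measurable_funD.
Qed.

Lemma sqmodZ (R : realType) (k : R) (z : R[i]) : sqmod (k%:C%C * z) = k ^+ 2 * sqmod z.
Proof. by case: z => x y; rewrite /sqmod /=; ring. Qed.

Lemma sqmod0 (R : realType) : sqmod (0 : R[i]) = 0.
Proof. by rewrite /sqmod /= expr0n /= addr0. Qed.

Lemma sqmod_eq0 (R : realType) (z : R[i]) : sqmod z = 0 -> z = 0.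
Proof.
case: z => x y; rewrite /sqmod /= => /eqP.
rewrite paddr_eq0 ?sqr_ge0 // !sqrf_eq0 => /andP[/eqP -> /eqP ->] //.
Qed.

Lemma lincomb_mask (R : realType) (I : finType) (phi : I -> R -> R[i]) (P : pred I) (a : I -> R[i]) :
  lincomb phi P a = lincomb phi predT (fun n => if P n then a n else 0).
Proof.
apply: funext => x; rewrite /lincomb big_mkcond /=; apply: eq_bigr => n _.
by case: (P n) => //; rewrite mul0r.
Qed.

Lemma inH_lincomb (R : realType) (I : finType) (phi : I -> R -> R[i]) (d1 d2 : R)
   (P : pred I) (b : I -> R[i]) :
  riesz_basis phi d1 d2 -> inH (lincomb phi P b).
Proof.
case=> d1p Hphi Hr; split.
- rewrite /lincomb; under eq_fun do rewrite Re_sum.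
  apply: meas_sum_real => n; under eq_fun do rewrite ReM.
  case: (Hphi n) => mRe mIm _ _.
  apply: measurable_funB; apply: measurable_funM => //; exact: measurable_cst.
- rewrite /lincomb; under eq_fun do rewrite Im_sum.
  apply: meas_sum_real => n; under eq_fun do rewrite ImM.
  case: (Hphi n) => mRe mIm _ _.
  apply: measurable_funD; apply: measurable_funM => //; exact: measurable_cst.
- move=> x hx; rewrite /lincomb big1 // => n _.
  by case: (Hphi n) => _ _ H0 _; rewrite H0 // mulr0.
- rewrite lincomb_mask; have [_ H] := Hr (fun n => if P n then b n else 0).
  by apply: le_lt_trans H _; rewrite -EFinM ltry.
Qed.

Lemma main_abstract (R : realType) (I : finType) (r : nat) (part : I -> 'I_r)
   (phi : I -> R -> R[i]) (d1 d2 : R)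
  (Q : (R -> R[i]) -> \bar R) (E : 'I_r -> \bar R) :
  riesz_basis phi d1 d2 ->
  (forall h (g : 'I_r -> R -> R[i]) (c : 'I_r -> R), inH h -> (forall j, inH (g j)) ->
     (forall j, 0 <= c j) ->
     (forall t, sqmod (fourier h t) <= \sum_j c j * sqmod (fourier (g j) t)) ->
     (Q h <= \sum_j (c j)%:E * Q (g j))%E) ->
  (forall h g c, inH h -> inH g -> 0 <= c ->
     (forall t, sqmod (fourier h t) <= c * sqmod (fourier g t)) ->
     (Q h <= c%:E * Q g)%E) ->
  (forall i, (0 <= E i)%E) ->
  (forall i g, cspan phi (fun n => part n == i) g -> inH g -> hnorm2 g = 1%E ->
     (Q g <= E i)%E) ->
  forall a, hnorm2 (lincomb phi predT a) = 1%E ->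
  (Q (lincomb phi predT a) <= (d2 / d1)%:E * \sum_i E i)%E.
Proof.
move=> Hrb Qm Qm1 E0 EQ a Ha.
have [d1p Hphi Hr] := Hrb.
pose fi i := lincomb phi (fun n => part n == i) a.
pose S i := \sum_n sqmod (if part n == i then a n else 0).
have S0 i : 0 <= S i by apply: sumr_ge0 => n _; exact: sqmod_ge0.
have HSa : \sum_i S i = \sum_n sqmod (a n).
  rewrite [RHS](partition_big part predT) //=; apply: eq_bigr => i _.
  rewrite /S [RHS]big_mkcond /=; apply: eq_bigr => n _.
  by case: ifP => _ //; rewrite sqmod0.
have [Hl Hu] := Hr a.
rewrite Ha -EFinM lee_fin in Hl; rewrite Ha -EFinM lee_fin in Hu.
have sa0 : 0 <= \sum_n sqmod (a n) by apply: sumr_ge0 => n _; exact: sqmod_ge0.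
have d2p : 0 < d2 by nra.
set T := \sum_i S i.
have T0 : 0 <= T by apply: sumr_ge0.
have Fsum t : fourier (lincomb phi predT a) t = \sum_i fourier (fi i) t.
  rewrite fourier_lincomb // (partition_big part predT) //=; apply: eq_bigr => i _.
  by rewrite fourier_lincomb.
have Fz i t : S i = 0 -> fourier (fi i) t = 0.
  move=> Si; rewrite fourier_lincomb // big1 // => n /eqP pn.
  have := @psumr_eq0P _ _ _ _ (fun n _ => sqmod_ge0 _) Si n isT.
  by rewrite pn eqxx => /sqmod_eq0 ->; rewrite mul0r.
have st1 : (Q (lincomb phi predT a) <= \sum_i (T / S i)%:E * Q (fi i))%E.
  apply: Qm.
  - exact: inH_lincomb Hrb.
  - move=> j; exact: inH_lincomb Hrb.
  - by move=> j; rewrite divr_ge0.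
  - move=> t; rewrite Fsum.
    apply: le_trans (wCS_c S0 (fun i => Fz i t)) _.
    rewrite mulr_sumr; apply: ler_sum => i _.
    rewrite le_eqVlt; apply/orP; left; apply/eqP; rewrite /T; ring.
have st2 i : ((T / S i)%:E * Q (fi i) <= (T * d2)%:E * E i)%E.
  have [Si0|Sip] := eqVneq (S i) 0.
    rewrite Si0 invr0 mulr0 mul0e; apply: mule_ge0 => //.
    by rewrite lee_fin mulr_ge0 // ltW.
  have Sipos : 0 < S i by rewrite lt_def Sip S0.
  have [Hli Hui] := Hr (fun n => if part n == i then a n else 0).
  have fiE : fi i = lincomb phi predT (fun n => if part n == i then a n else 0).
    exact: lincomb_mask.
  rewrite -fiE in Hli Hui.
  have Hfi : inH (fi i) by exact: inH_lincomb Hrb.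
  have h0 : (0 <= hnorm2 (fi i))%E.
    by apply: integral_ge0 => x _; rewrite lee_fin sqmod_ge0.
  have hc : hnorm2 (fi i) = (fine (hnorm2 (fi i)))%:E.
    rewrite fineK // ge0_fin_numE //; apply: le_lt_trans Hui _.
    by rewrite -EFinM ltry.
  set c := fine (hnorm2 (fi i)) in hc.
  rewrite hc -EFinM lee_fin in Hli; rewrite hc -EFinM lee_fin in Hui.
  have cp : 0 < c by apply: lt_le_trans Hli; rewrite mulr_gt0.
  pose k := (Num.sqrt c)^-1.
  have kc : k ^+ 2 * c = 1.
    by rewrite /k exprVn sqr_sqrtr ?ltW // mulVf // gt_eqF.
  pose g := lincomb phi (fun n => part n == i) (fun n => k%:C%C * a n).
  have gx x : g x = k%:C%C * fi i x.
    by rewrite /g /fi /lincomb mulr_sumr; apply: eq_bigr => n _; rewrite mulrA.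
  have Fg t : fourier g t = k%:C%C * fourier (fi i) t.
    rewrite /g /fi !fourier_lincomb // mulr_sumr; apply: eq_bigr => n _.
    by rewrite mulrA.
  have Hg : inH g by exact: inH_lincomb Hrb.
  have Hg1 : hnorm2 g = 1%E.
    rewrite /hnorm2; under eq_integral do rewrite gx sqmodZ EFinM.
    rewrite ge0_integralZl //.
    - by rewrite -/(hnorm2 (fi i)) hc -EFinM kc.
    - by apply/measurable_EFinP; exact: measurable_sqmod.
    - by move=> x _; rewrite lee_fin sqmod_ge0.
    - by rewrite lee_fin sqr_ge0.
  have QgE : (Q g <= E i)%E.
    apply: EQ => //; by exists (fun n => k%:C%C * a n).
  have Qf : (Q (fi i) <= c%:E * Q g)%E.
    apply: Qm1 => //; first exact: ltW.
    move=> t; rewrite Fg sqmodZ mulrA (mulrC c) kc mul1r; exact: lexx.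
  apply: le_trans (lee_wpmul2l _ Qf) _.
    by rewrite lee_fin divr_ge0 // ltW.
  rewrite muleA -EFinM.
  apply: le_trans (lee_wpmul2l _ QgE) _.
    by rewrite lee_fin mulr_ge0 ?divr_ge0 // ltW.
  apply: lee_wpmul2r => //; rewrite lee_fin.
  have h1 : T / S i * c <= T / S i * (d2 * S i).
    by apply: ler_wpM2l => //; rewrite divr_ge0 // ltW.
  apply: le_trans h1 _; rewrite le_eqVlt; apply/orP; left; apply/eqP.
  by field; rewrite Sip.
apply: le_trans st1 _.
apply: le_trans; first by apply: lee_sum => i _; exact: st2 i.
rewrite -ge0_sume_distrr //; apply: lee_wpmul2r.
  by apply: sume_ge0 => i _.
rewrite lee_fin.
have hT : T * d1 <= 1 by rewrite /T HSa; nra.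
have hT' : T <= 1 / d1 by rewrite ler_pdivlMr.
have -> : d2 / d1 = 1 / d1 * d2 by rewrite mul1r mulrC.
by apply: ler_wpM2r => //; exact: ltW.
Qed.

Lemma d2_pos (R : realType) (I : finType) (phi : I -> R -> R[i]) (d1 d2 : R) (a : I -> R[i]) :
  riesz_basis phi d1 d2 -> hnorm2 (lincomb phi predT a) = 1%E -> 0 < d2.
Proof.
case=> d1p _ Hr Ha; have [_ Hu] := Hr a.
rewrite Ha -EFinM lee_fin in Hu.
have sa0 : 0 <= \sum_n sqmod (a n) by apply: sumr_ge0 => n _; exact: sqmod_ge0.
nra.
Qed.

Lemma Q1mono1 (R : realType) (z : R) (h g : R -> R[i]) (c : R) :
  inH h -> inH g -> 0 <= c ->
  (forall t, sqmod (fourier h t) <= c * sqmod (fourier g t)) ->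
  (hat_tail2 h z <= c%:E * hat_tail2 g z)%E.
Proof.
move=> Hh Hg c0 Hle.
have := @Q1mono R z 'I_1 h (fun _ => g) (fun _ => c) Hh (fun=> Hg) (fun=> c0).
rewrite big_ord1; apply => t; rewrite big_ord1; exact: Hle.
Qed.

Lemma Q2mono1 (R : realType) (w : int -> R) (N : nat) (h g : R -> R[i]) (c : R) :
  0 <= c ->
  (forall t, sqmod (fourier h t) <= c * sqmod (fourier g t)) ->
  (\esum_(n in [set n : int | (N%:Z < `|n|)%R]) (sqmod (fourier h (w n)))%:E <=
   c%:E * \esum_(n in [set n : int | (N%:Z < `|n|)%R]) (sqmod (fourier g (w n)))%:E)%E.
Proof.
move=> c0 Hle.
have := @Q2mono R w N 'I_1 h (fun _ => g) (fun _ => c) (fun=> c0).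
rewrite big_ord1; apply => t; rewrite big_ord1; exact: Hle.
Qed.

Theorem lemma5p9 (R : realType) (I : finType) (r : nat) (part : I -> 'I_r)
    (phi : I -> R -> R[i]) (d1 d2 : R) :
  riesz_basis phi d1 d2 ->
  (forall z : R, 0 <= z ->
     (Econc (cspan phi predT) z <=
      sqrte ((d2 / d1)%:E *
             \sum_(i < r) (Econc (cspan phi (fun n => part n == i)) z) ^+ 2))%E) /\
  (forall w : int -> R, fourier_frame w -> forall N : nat,
     (Etilde w (cspan phi predT) N <=
      sqrte ((d2 / d1)%:E *
             \sum_(i < r) (Etilde w (cspan phi (fun n => part n == i)) N) ^+ 2))%E).
Proof.
move=> Hrb; have d1p : 0 < d1 by case: Hrb.
split.
- move=> z z0; rewrite {1}/Econc; apply: ge_ereal_sup => _ [-> | [f [[a ->] [Hf H1]] <-]].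
    exact: sqrte_ge0.
  have d2p := d2_pos Hrb H1.
  rewrite lee_sqrt; last first.
    apply: mule_ge0; first by rewrite lee_fin divr_ge0 // ltW.
    by apply: sume_ge0 => i _; exact: sqre_ge0.
  apply: (@main_abstract R I r part phi d1 d2 (fun h => hat_tail2 h z)) => //.
  + move=> h g c Hh Hg c0 Hle; exact: Q1mono.
  + move=> h g c Hh Hg c0 Hle; exact: Q1mono1.
  + by move=> i; exact: sqre_ge0.
  + move=> i g Hsp Hg Hg1.
    have hq : (0 <= hat_tail2 g z)%E.
      by apply: integral_ge0 => t _; rewrite lee_fin sqmod_ge0.
    have Hle : (sqrte (hat_tail2 g z) <= Econc (cspan phi (fun n => part n == i)) z)%E.
      apply: ereal_sup_ubound; right; exists g => //.
    rewrite -(sqr_sqrte hq) !expe2.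
    by apply: lee_pmul => //; exact: sqrte_ge0.
- move=> w _ N.
  rewrite {1}/Etilde; set A := ereal_sup _.
  have [d2p|d2n] := ltP 0 d2; last first.
    have A0 : (A <= 0)%E.
      apply: ge_ereal_sup => _ [-> // | [f [[a ->] [Hf H1]] <-]].
      by have := d2_pos Hrb H1; rewrite ltNge d2n.
    apply: le_trans (sqrte_ge0 _).
    have -> : sqrte A = 0%E.
      have : (0 <= A)%E by apply: ereal_sup_ubound; left.
      move=> A0'; have -> : A = 0%E by apply/eqP; rewrite eq_le A0 A0'.
      exact: sqrte0.
    by [].
  rewrite lee_sqrt; last first.
    apply: mule_ge0; first by rewrite lee_fin divr_ge0 // ltW.
    by apply: sume_ge0 => i _; exact: sqre_ge0.
  apply: ge_ereal_sup => _ [-> | [f [[a ->] [Hf H1]] <-]].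
    apply: mule_ge0; first by rewrite lee_fin divr_ge0 // ltW.
    by apply: sume_ge0 => i _; exact: sqre_ge0.
  apply: (@main_abstract R I r part phi d1 d2
     (fun h => \esum_(n in [set n : int | (N%:Z < `|n|)%R]) (sqmod (fourier h (w n)))%:E)) => //.
  + move=> h g c Hh Hg c0 Hle; exact: Q2mono.
  + move=> h g c Hh Hg c0 Hle; exact: Q2mono1.
  + by move=> i; exact: sqre_ge0.
  + move=> i g Hsp Hg Hg1.
    rewrite /Etilde; set B := ereal_sup _.
    have B0 : (0 <= B)%E by apply: ereal_sup_ubound; left.
    rewrite sqr_sqrte //.
    apply: ereal_sup_ubound; right; exists g => //.
Qed.
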